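(* There is an absolute constant $c$ such that for every connected edge-weighted graph $G$ with diameter $\Delta$ and every $\varepsilon\in(0,1)$, every width-$\varepsilon\Delta$ gridtree hierarchy of $G$ has depth at most $c/\varepsilon$.
   Context: Let $H$ be a connected edge-weighted graph and $w>0$. A $w$-gridtree for $H$ consists of a partition of $V(H)$ into disjoint subsets, each designated either a column or a leftover set, together with a rooted tree $\mathcal{T}$ whose nodes are in one-to-one correspondence with the columns and whose edges are in one-to-one correspondence with the leftover sets, satisfying: (Column adjacency) For every edge $(u,v)$ of $H$: either $u,v$ lie in the same subset, or $u,v$ lie in columns adjacent in $\mathcal{T}$, or one lies in a column $\eta$ and the other in a leftover set whose edge of $\mathcal{T}$ is incident to $\eta$. (Column width) For a column $\eta$, every other column and every edge of $\mathcal{T}$ is either below $\eta$ (in the subtree of $\mathcal{T}$ rooted at $\eta$; for edges, both endpoints in that subtree) or above $\eta$ (otherwise); a vertex is above/below $\eta$ if its column or leftover set is. If $a\in\eta$ is adjacent in $H$ to a vertex above $\eta$, $b$ is a vertex below $\eta$, and $P$ is a path in $H$ from $a$ to $b$, then $P$ has length at least $w$. (Column shortcut) For a column $\eta$, let $H_\eta$ be the subgraph of $H$ induced by $\eta$, all columns below $\eta$, and all leftover sets below $\eta$ or incident to $\eta$. There is a shortest path $\pi_\eta$ of $H_\eta$ such that every vertex of $\eta$ is within distance $2w$ of $\pi_\eta$ in the induced subgraph $H[\eta]$. A width-$w$ gridtree hierarchy $\mathcal{H}$ of $G$ is a rooted tree whose nodes are pairs $\mu=(H^\mu,\mathcal{T}^\mu)$,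 with $H^\mu$ a connected subgraph of $G$ and $\mathcal{T}^\mu$ a $w$-gridtree for $H^\mu$, the root being associated with $G$ itself, such that: (Layer nesting) the children of $\mu$ are in one-to-one correspondence with the connected components of the subgraphs of $H^\mu$ induced by the leftover sets of $\mathcal{T}^\mu$, each child $\mu'$ having $H^{\mu'}$ equal to its component; (Layer width) a vertex $v$ of $H^\mu$ is an outer vertex if it is adjacent in $G$ to a vertex in a column of $\mathcal{T}^{\mathrm{Pa}(\mu)}$, where $\mathrm{Pa}(\mu)$ is the parent (the root has no outer vertices); every vertex $u$ of $H^\mu$ with $\mathrm{dist}_{H^\mu}(u,v)\le w$ for some outer vertex $v$ of $H^\mu$ belongs to a column of $\mathcal{T}^\mu$. The depth of $\mathcal{H}$ is its number of layers (levels of the rooted tree $\mathcal{H}$). *)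

(* Defs.v *)
From Stdlib Require Import Reals.
From mathcomp Require Import all_boot.

Set Implicit Arguments.
Unset Strict Implicit.
Unset Printing Implicit Defensive.

Section Graph.
Variables (V : finType) (e : rel V) (wt : V -> V -> R).

(* [u :: p] is a walk inside S: u in S, consecutive vertices adjacent in G,
   all vertices in S.  Since S is used as a vertex set, this is a walk in the
   induced subgraph G[S]. *)
Fixpoint walk_from (S : V -> Prop) (x : V) (p : seq V) : Prop :=
  match p with
  | [::] => True
  | y :: q => e x y /\ S y /\ walk_from S y q
  end.

Definition walk (S : V -> Prop) (u v : V) (p : seq V) : Prop :=
  S u /\ walk_from S u p /\ last u p = v.

Definition wlen (u : V) (p : seq V) : R :=
  foldr Rplus R0 (pairmap wt u p).

Definition is_dist (S : V -> Prop) (u v : V) (d : R) : Prop :=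
  (exists p, walk S u v p /\ wlen u p = d) /\
  (forall p, walk S u v p -> Rle d (wlen u p)).

Definition dist_le (S : V -> Prop) (u v : V) (r : R) : Prop :=
  exists d, is_dist S u v d /\ Rle d r.

Definition connected (S : V -> Prop) : Prop :=
  forall u v, S u -> S v -> exists p, walk S u v p.

Definition mem_set (A : {set V}) : V -> Prop := fun x => x \in A.

Definition diameter (D : R) : Prop :=
  (forall u v : V, dist_le (fun _ => True) u v D) /\
  (exists u v : V, is_dist (fun _ => True) u v D).

Definition is_component (L C : {set V}) : Prop :=
  C != set0 /\ C \subset L /\ connected (mem_set C) /\
  (forall x y, x \in C -> y \in L -> e x y -> y \in C).

(* Columns are the nodes of the rooted tree T (identified with their vertex
   sets); [gt_par] is the parent map (with gt_par root = root); the edge of T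
   from a non-root column xi to its parent is in bijection with the leftover
   set [gt_lft xi]. *)
Record gridtree := Gridtree {
  gt_cols : {set {set V}};
  gt_root : {set V};
  gt_par  : {set V} -> {set V};
  gt_lft  : {set V} -> {set V}
}.

Definition nonroot (T : gridtree) : {set {set V}} :=
  [set eta in gt_cols T | eta != gt_root T].
Definition lefts (T : gridtree) : {set {set V}} := gt_lft T @: nonroot T.
Definition parts (T : gridtree) : {set {set V}} := gt_cols T :|: lefts T.

Definition gt_wf (H : {set V}) (T : gridtree) : Prop :=
  gt_root T \in gt_cols T /\
  gt_par T (gt_root T) = gt_root T /\
  (forall eta, eta \in nonroot T -> gt_par T eta \in gt_cols T) /\
  (forall eta, eta \in gt_cols T -> exists k, iter k (gt_par T) eta = gt_root T) /\
  {in nonroot T &, injective (gt_lft T)} /\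
  [disjoint gt_cols T & lefts T] /\
  partition (parts T) H.

Definition col_below (T : gridtree) (eta xi : {set V}) : Prop :=
  xi \in gt_cols T /\ exists k, iter k (gt_par T) xi = eta.

Definition edge_below (T : gridtree) (eta xi : {set V}) : Prop :=
  xi \in nonroot T /\ col_below T eta xi /\ col_below T eta (gt_par T xi).

Definition vert_below (T : gridtree) (eta : {set V}) (x : V) : Prop :=
  (exists xi, xi != eta /\ col_below T eta xi /\ x \in xi) \/
  (exists xi, edge_below T eta xi /\ x \in gt_lft T xi).

Definition vert_above (T : gridtree) (eta : {set V}) (x : V) : Prop :=
  (exists xi, xi \in gt_cols T /\ xi != eta /\ ~ col_below T eta xi /\ x \in xi) \/
  (exists xi, xi \in nonroot T /\ ~ edge_below T eta xi /\ x \in gt_lft T xi).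

Definition col_adjacency (H : {set V}) (T : gridtree) : Prop :=
  forall u v, u \in H -> v \in H -> e u v ->
    (exists P, P \in parts T /\ u \in P /\ v \in P) \/
    (exists eta xi, eta \in gt_cols T /\ xi \in gt_cols T /\
        ((eta \in nonroot T /\ gt_par T eta = xi) \/
         (xi \in nonroot T /\ gt_par T xi = eta)) /\
        u \in eta /\ v \in xi) \/
    (exists eta xi, eta \in gt_cols T /\ xi \in nonroot T /\
        (xi = eta \/ gt_par T xi = eta) /\
        ((u \in eta /\ v \in gt_lft T xi) \/ (v \in eta /\ u \in gt_lft T xi))).

Definition col_width (H : {set V}) (w : R) (T : gridtree) : Prop :=
  forall eta a b p, eta \in gt_cols T -> a \in eta ->
    (exists y, y \in H /\ e a y /\ vert_above T eta y) ->
    vert_below T eta b ->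
    walk (mem_set H) a b p -> Rle w (wlen a p).

Definition H_sub (T : gridtree) (eta : {set V}) : V -> Prop := fun x =>
  (exists xi, col_below T eta xi /\ x \in xi) \/
  (exists xi, edge_below T eta xi /\ x \in gt_lft T xi) \/
  (exists xi, xi \in nonroot T /\ (xi = eta \/ gt_par T xi = eta) /\
              x \in gt_lft T xi).

Definition shortest_walk (S : V -> Prop) (s : V) (p : seq V) : Prop :=
  walk S s (last s p) p /\
  forall q, walk S s (last s p) q -> Rle (wlen s p) (wlen s q).

Definition col_shortcut (w : R) (T : gridtree) : Prop :=
  forall eta, eta \in gt_cols T ->
    exists s p, shortest_walk (H_sub T eta) s p /\
      forall v, v \in eta ->
        exists x, x \in s :: p /\ dist_le (mem_set eta) v x (Rmult 2 w).

Definition is_gridtree (H : {set V}) (w : R) (T : gridtree) : Prop :=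
  Rlt R0 w /\ gt_wf H T /\ col_adjacency H T /\ col_width H w T /\ col_shortcut w T.

Definition col_union (T : gridtree) : {set V} := \bigcup_(eta in gt_cols T) eta.

Definition leftover_comp (T : gridtree) (C : {set V}) : Prop :=
  exists L, L \in lefts T /\ is_component L C.

(* layer width: pc = union of the columns of the parent's gridtree (set0 for
   the root) *)
Definition layer_width (H : {set V}) (w : R) (T : gridtree) (pc : {set V}) : Prop :=
  forall u v, u \in H -> v \in H ->
    (exists y, y \in pc /\ e v y) ->
    dist_le (mem_set H) u v w ->
    u \in col_union T.

Inductive hier :=
  HNode : {set V} -> gridtree -> seq hier -> hier.

Definition hgraph (h : hier) : {set V} := let: HNode H _ _ := h in H.

Fixpoint hdepth (h : hier) : nat :=
  let: HNode _ _ ch := h in (foldr maxn 0 (map hdepth ch)).+1.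

Inductive valid_hier (w : R) : {set V} -> hier -> Prop :=
| ValidNode (pc H : {set V}) (T : gridtree) (ch : seq hier) :
    connected (mem_set H) ->
    is_gridtree H w T ->
    layer_width H w T pc ->
    uniq (map hgraph ch) ->
    (forall C, C \in map hgraph ch <-> leftover_comp T C) ->
    (forall c, List.In c ch -> valid_hier w (col_union T) c) ->
    valid_hier w pc (HNode H T ch).

Definition gridtree_hierarchy (w : R) (h : hier) : Prop :=
  hgraph h = [set: V] /\ valid_hier w set0 h.

End Graph.

(* Main.v *)
Require Import Defs.
From Stdlib Require Import Reals Lra Classical.
From mathcomp Require Import all_boot zify.

Set Implicit Arguments.
Unset Strict Implicit.
Unset Printing Implicit Defensive.
Local Open Scope R_scope.

Lemma wlen_nil (V : finType) (wt : V -> V -> R) x : wlen wt x [::] = 0.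
Proof. by []. Qed.

Lemma wlen_cons (V : finType) (wt : V -> V -> R) x y p :
  wlen wt x (y :: p) = (wt x y + wlen wt y p).
Proof. by []. Qed.

Lemma wlen_cat (V : finType) (wt : V -> V -> R) x p1 p2 :
  wlen wt x (p1 ++ p2) = (wlen wt x p1 + wlen wt (last x p1) p2).
Proof.
elim: p1 x => [|y p IH] x /=; first by rewrite wlen_nil Rplus_0_l.
by rewrite !wlen_cons IH Rplus_assoc.
Qed.

Lemma walk_from_cat (V : finType) (e : rel V) S x p1 p2 :
  walk_from e S x (p1 ++ p2) <-> walk_from e S x p1 /\ walk_from e S (last x p1) p2.
Proof.
elim: p1 x => [|y p IH] x /=; first by tauto.
rewrite IH; tauto.
Qed.

Lemma wlen_ge0 (V : finType) (e : rel V) (wt : V -> V -> R) S x p :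
  (forall x y, e x y -> (0 < wt x y)) ->
  walk_from e S x p -> (0 <= wlen wt x p).
Proof.
move=> hpos; elim: p x => [|y p IH] x /=; first by move=> _; rewrite wlen_nil; lra.
move=> [exy [_ hw]]; rewrite wlen_cons; have := hpos _ _ exy; have := IH _ hw; lra.
Qed.

Lemma walk_from_mono (V : finType) (e : rel V) (S S' : V -> Prop) x p :
  (forall v, S v -> S' v) -> walk_from e S x p -> walk_from e S' x p.
Proof.
move=> hS; elim: p x => [|y p IH] x //= [h1 [h2 h3]]; split=> //; split; auto.
Qed.

Lemma walk_from_all (V : finType) (e : rel V) (S : V -> Prop) (A : {set V}) x p :
  walk_from e S x p -> all (fun v => v \in A) p -> walk_from e (mem_set A) x p.
Proof.
elim: p x => [|y p IH] x //= [h1 [h2 h3]] /andP [hy hp]; split=> //; split; auto.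
Qed.

Lemma walk_from_in (V : finType) (e : rel V) (S : V -> Prop) x p v :
  walk_from e S x p -> v \in p -> S v.
Proof.
elim: p x => [|y p IH] x //= [h1 [h2 h3]]; rewrite in_cons => /orP [/eqP->|] //.
by move=> hv; exact: IH h3 hv.
Qed.

Lemma first_exit (V : finType) (A : {set V}) x p :
  x \in A -> last x p \notin A ->
  exists p1 y p2, p = p1 ++ y :: p2 /\ all (fun v => v \in A) p1 /\ y \notin A.
Proof.
elim: p x => [|z p IH] x /= hx; first by rewrite hx.
case hz: (z \in A) => hl.
  have [p1 [y [p2 [-> [h1 h2]]]]] := IH _ hz hl.
  by exists (z :: p1), y, p2; rewrite /= hz.
by exists [::], z, p; rewrite hz.
Qed.

Lemma mem_split (V : finType) (a : V) p :
  a \in p -> exists p1 p2, p = p1 ++ a :: p2.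
Proof.
elim: p => [|z p IH] //; rewrite in_cons => /orP [/eqP->|/IH [p1 [p2 ->]]].
  by exists [::], p.
by exists (z :: p1), p2.
Qed.

Lemma shorten (V : finType) (e : rel V) (wt : V -> V -> R) S :
  (forall x y, e x y -> 0 < wt x y) ->
  forall n a b p, (size p < n)%N -> walk e S a b p ->
  exists q, walk e S a b q /\ uniq (a :: q) /\ {subset q <= p} /\
            wlen wt a q <= wlen wt a p.
Proof.
move=> hpos; elim=> [|n IH] a b p //= hn [hSa [hw hl]].
case ha: (a \in p).
  have [p1 [p2 ep]] := mem_split ha.
  move: hw hl; rewrite ep walk_from_cat last_cat /= => -[hw1 [he [_ hw2]]] hl.
  have hsz : (size p2 < n)%N.
    move: hn; rewrite ep size_cat /=; lia.
  have [q [hq1 [hq2 [hq3 hq4]]]] := IH a b p2 hsz (conj hSa (conj hw2 hl)).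
  exists q; split=> //; split=> //; split.
    by move=> v /hq3 hv; rewrite mem_cat in_cons hv !orbT.
  rewrite wlen_cat wlen_cons.
  have := wlen_ge0 (wt:=wt) hpos hw1; have := hpos _ _ he; lra.
case: p hn hw hl ha => [|c p'] hn hw hl ha.
  by exists [::]; split=> //; split=> //; split=> //; lra.
move: hw => /= [hac [hSc hw']].
have [q [hq1 [hq2 [hq3 hq4]]]] := IH c b p' hn (conj hSc (conj hw' hl)).
exists (c :: q); split.
  by move: hq1 => [h1 [h2 h3]]; split=> //; split.
split.
  rewrite hq2 andbT; apply/negP => hin.
  have : a \in c :: p'.
    move: hin; rewrite in_cons => /orP [/eqP->|/hq3 hv]; first by rewrite in_cons eqxx.
    by rewrite in_cons hv orbT.
  by rewrite ha.
split.
  move=> v; rewrite !in_cons => /orP [->//|/hq3 ->]; by rewrite orbT.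
by rewrite !wlen_cons; lra.
Qed.

Fixpoint seqs (V : finType) (n : nat) : seq (seq V) :=
  if n is n'.+1 then [::] :: [seq x :: q | x <- enum V, q <- seqs V n'] else [:: [::]].

Lemma mem_seqs (V : finType) n (q : seq V) : (size q <= n)%N -> q \in seqs V n.
Proof.
elim: n q => [|n IH] [|x q] //= hs.
rewrite in_cons; apply/orP; right; apply: allpairs_f; first by rewrite mem_enum.
exact: IH.
Qed.

Lemma min_list (T : eqType) (P : T -> Prop) (f : T -> R) (Q : seq T) :
  (exists q, q \in Q /\ P q) ->
  exists q, q \in Q /\ P q /\ forall q', q' \in Q -> P q' -> f q <= f q'.
Proof.
elim: Q => [|z Q IH] [q [hq hP]] //.
destruct (classic (exists q, q \in Q /\ P q)) as [hex|hnex].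
  have [m [hm [hPm hmin]]] := IH hex.
  destruct (classic (P z)) as [hz|hz].
    destruct (Rle_dec (f z) (f m)) as [hle|hlt].
      exists z; split; first by rewrite in_cons eqxx.
      split=> // q'; rewrite in_cons => /orP [/eqP->|hq'] hP'; first lra.
      have := hmin _ hq' hP'; lra.
    exists m; split; first by rewrite in_cons hm orbT.
    split=> // q'; rewrite in_cons => /orP [/eqP->|hq'] hP'; first lra.
    exact: hmin.
  exists m; split; first by rewrite in_cons hm orbT.
  split=> // q'; rewrite in_cons => /orP [/eqP->|hq'] hP' //; last exact: hmin.
have hqz : q = z.
  move: hq; rewrite in_cons => /orP [/eqP//|hq]; by case: hnex; exists q.
subst q; exists z; split; first by rewrite in_cons eqxx.
split=> // q'; rewrite in_cons => /orP [/eqP->|hq'] hP'; first lra.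
by case: hnex; exists q'.
Qed.

Lemma exists_dist (V : finType) (e : rel V) (wt : V -> V -> R) S a b p :
  (forall x y, e x y -> 0 < wt x y) ->
  walk e S a b p -> exists d, is_dist e wt S a b d /\ d <= wlen wt a p.
Proof.
move=> hpos hw.
have shortQ : forall p', walk e S a b p' ->
    exists q, q \in seqs V #|V| /\ walk e S a b q /\ wlen wt a q <= wlen wt a p'.
  move=> p' hw'.
  have [q [hq1 [hq2 [_ hq4]]]] := shorten (wt:=wt) hpos (ltnSn (size p')) hw'.
  exists q; split=> //; apply: mem_seqs.
  have := uniq_leq_size (s2 := enum V) hq2 (fun v _ => mem_enum V v).
  by rewrite -cardE /= => /ltnW.
have [q0 [hq0 [hw0 hl0]]] := shortQ p hw.
have [m [hm [hwm hmin]]] := min_list (P := walk e S a b) (wlen wt a) (ex_intro _ q0 (conj hq0 hw0)).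
exists (wlen wt a m); split; last by have := hmin _ hq0 hw0; lra.
split; first by exists m.
move=> p' hw'; have [q [hq [hwq hlq]]] := shortQ p' hw'.
have := hmin _ hq hwq; lra.
Qed.

Lemma parts_facts (V : finType) (H : {set V}) (T : gridtree V) :
  gt_wf H T -> [/\ trivIset (parts T), cover (parts T) = H & set0 \notin parts T].
Proof.
move=> [_ [_ [_ [_ [_ [_ hp]]]]]].
by move: hp => /and3P [/eqP h1 h2 h3].
Qed.

Lemma left_parts (V : finType) (T : gridtree V) L : L \in lefts T -> L \in parts T.
Proof. by move=> hL; rewrite /parts inE hL orbT. Qed.

Lemma col_parts (V : finType) (T : gridtree V) L : L \in gt_cols T -> L \in parts T.
Proof. by move=> hL; rewrite /parts inE hL. Qed.

Lemma part_sub (V : finType) (H : {set V}) (T : gridtree V) P x :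
  gt_wf H T -> P \in parts T -> x \in P -> x \in H.
Proof.
move=> hwf hP hx; have [_ <- _] := parts_facts hwf.
by apply/bigcupP; exists P.
Qed.

Lemma col_left_disj (V : finType) (H : {set V}) (T : gridtree V) eta L y :
  gt_wf H T -> eta \in gt_cols T -> L \in lefts T -> y \in eta -> y \in L -> False.
Proof.
move=> hwf he hL hy1 hy2.
have hd : [disjoint gt_cols T & lefts T] by move: hwf => [_ [_ [_ [_ [_ [hd _]]]]]].
have hne : eta != L.
  by apply/eqP => eq; move: (disjointFr hd he); rewrite eq hL.
have [ht _ _] := parts_facts hwf.
have := (trivIsetP ht) _ _ (col_parts he) (left_parts hL) hne.
by move/disjointFr => /(_ _ hy1); rewrite hy2.
Qed.

Lemma comp_not_col (V : finType) (e : rel V) (H : {set V}) (T : gridtree V) C x :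
  gt_wf H T -> leftover_comp e T C -> x \in C -> x \notin col_union T.
Proof.
move=> hwf [L [hL [_ [hCL _]]]] hx; apply/negP => /bigcupP [eta he hxe].
exact: (col_left_disj hwf he hL hxe (subsetP hCL _ hx)).
Qed.

Lemma comp_sub (V : finType) (e : rel V) (H : {set V}) (T : gridtree V) C x :
  gt_wf H T -> leftover_comp e T C -> x \in C -> x \in H.
Proof.
move=> hwf [L [hL [_ [hCL _]]]] hx.
exact: (part_sub hwf (left_parts hL) (subsetP hCL _ hx)).
Qed.

Lemma exit_col (V : finType) (e : rel V) (H : {set V}) (T : gridtree V) C y z :
  gt_wf H T -> col_adjacency e H T -> leftover_comp e T C ->
  y \in C -> z \in H -> e y z -> z \notin C -> z \in col_union T.
Proof.
move=> hwf hadj hC hy hz eyz hzC.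
have hyH := comp_sub hwf hC hy.
move: (hC) => [L [hL [_ [hCL [_ hclos]]]]].
have hyL := subsetP hCL _ hy.
have [ht _ _] := parts_facts hwf.
case: (hadj _ _ hyH hz eyz) => [[P [hP [hyP hzP]]]|[[eta [xi [he [hxi [_ [hye hzx]]]]]]|[eta [xi [he [hxi [_ [[hye _]|[hze _]]]]]]]]].
- case: (eqVneq P L) => [ePL|hne].
    by subst P; move: hzC; rewrite (hclos _ _ hy hzP eyz).
  have := (trivIsetP ht) _ _ hP (left_parts hL) hne.
  by move/disjointFr => /(_ _ hyP); rewrite hyL.
- by case: (col_left_disj hwf he hL hye hyL).
- by case: (col_left_disj hwf he hL hye hyL).
- by apply/bigcupP; exists eta.
Qed.

Lemma foldr_maxn_mem (s : seq nat) : (0 < foldr maxn 0%N s)%N -> foldr maxn 0%N s \in s.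
Proof.
elim: s => [|x s IH] //= hpos.
rewrite in_cons; case: (leqP x (foldr maxn 0%N s)) => hle.
  have hm : maxn x (foldr maxn 0%N s) = foldr maxn 0%N s by apply/maxn_idPr.
  rewrite hm in hpos; by rewrite IH ?orbT.
have hm : maxn x (foldr maxn 0%N s) = x by apply/maxn_idPl; exact: ltnW.
by rewrite eqxx.
Qed.

Lemma in_map_nat (A : Type) (f : A -> nat) (s : seq A) n :
  n \in map f s -> exists a, List.In a s /\ f a = n.
Proof.
elim: s => [|a s IH] //=; rewrite in_cons => /orP [/eqP->|/IH [b [hb <-]]].
  by exists a; split=> //; left.
by exists b; split=> //; right.
Qed.

Lemma In_map_mem (A : Type) (B : eqType) (f : A -> B) (s : seq A) a :
  List.In a s -> f a \in map f s.
Proof.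
elim: s => [|b s IH] //= [->|h]; rewrite in_cons; first by rewrite eqxx.
by rewrite IH ?orbT.
Qed.

Lemma walk_last_in (V : finType) (e : rel V) S a b p :
  walk e S a b p -> S b.
Proof.
move=> [hSa [hw <-]]; have := mem_last a p; rewrite in_cons => /orP [/eqP->//|].
exact: walk_from_in hw.
Qed.

Lemma last_all_in (V : finType) (A : {set V}) x p :
  x \in A -> all (fun v => v \in A) p -> last x p \in A.
Proof.
move=> hx /allP hp; have := mem_last x p; rewrite in_cons => /orP [/eqP->//|].
exact: hp.
Qed.

Lemma is_dist_refl (V : finType) (e : rel V) (wt : V -> V -> R) S u :
  (forall x y, e x y -> 0 < wt x y) -> S u -> is_dist e wt S u u 0.
Proof.
move=> hpos hu; split; first by exists [::].
by move=> p [_ [hw _]]; exact: wlen_ge0 hpos hw.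
Qed.

Definition Inv (V : finType) (e : rel V) (wt : V -> V -> R) (w : R) (pc : {set V})
  (h : hier V) (k : nat) : Prop :=
  exists x, x \in hgraph h /\ forall u p, walk e (mem_set (hgraph h)) x u p ->
    (exists y, y \in pc /\ e u y) -> INR k * w <= wlen wt x p.

Lemma root_nonempty (V : finType) (H : {set V}) (T : gridtree V) :
  gt_wf H T -> exists z, z \in gt_root T.
Proof.
move=> hwf; have [_ _ h0] := parts_facts hwf.
have hr : gt_root T \in parts T by apply: col_parts; move: hwf => [hr _].
have : gt_root T != set0 by apply/eqP => eq; move: h0; rewrite -eq hr.
by move/set0Pn => [z hz]; exists z.
Qed.

Lemma inv_valid (V : finType) (e : rel V) (wt : V -> V -> R) (w : R) :
  (forall x y, e x y -> 0 < wt x y) ->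
  forall pc h, valid_hier e wt w pc h -> Inv e wt w pc h (hdepth h).-1.
Proof.
move=> hpos pc h hv; elim: hv => {pc h} pc0 H T ch _ hgt hlw _ hiff _ IH.
move: hgt => [hw [hwf [hadj _]]].
rewrite /= /Inv /=.
set m := foldr maxn 0%N (map (@hdepth V) ch).
case: (posnP m) => hm.
  have [z hz] := root_nonempty hwf.
  have hzH : z \in H by apply: (part_sub hwf (col_parts _) hz); move: hwf => [hr _].
  exists z; split=> // u p [_ [hwk _]] _; rewrite hm Rmult_0_l.
  exact: wlen_ge0 hpos hwk.
have [c [hc hcd]] := in_map_nat (foldr_maxn_mem hm).
have [x [hxC hx]] := IH c hc.
rewrite hcd in hx.
set C := hgraph c in hxC hx.
have hCl : leftover_comp e T C by apply/hiff; exact: In_map_mem.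
have hxH := comp_sub hwf hCl hxC.
exists x; split=> // u p hwk [y0 [hy0 euy0]].
have huH : u \in H := walk_last_in hwk.
have huc : u \in col_union T.
  apply: (hlw u u huH huH); first by exists y0.
  exists 0; split; first exact: is_dist_refl.
  lra.
have huC : u \notin C by apply/negP => /(comp_not_col hwf hCl); rewrite huc.
move: hwk => [_ [hwf' hl]].
have hlC : last x p \notin C by rewrite hl.
have [p1 [y [p2 [ep [hall hyC]]]]] := first_exit hxC hlC.
move: hwf' hl; rewrite ep walk_from_cat last_cat /= => -[hw1 [ery [hyH hw2]]] hl.
set r := last x p1 in ery hw2 hl.
have hrC : r \in C by exact: last_all_in.
have hyc : y \in col_union T := exit_col hwf hadj hCl hrC hyH ery hyC.
have h1 : INR m.-1 * w <= wlen wt x p1.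
  apply: (hx r p1); last by exists y.
  split=> //; split=> //; exact: walk_from_all hw1 hall.
have h2 : w <= wlen wt r (y :: p2).
  apply: Rnot_lt_le => hlt.
  have hwr : walk e (mem_set H) r u (y :: p2) by split; [exact: comp_sub hwf hCl hrC|split].
  have [d [hd hdle]] := exists_dist hpos hwr.
  have : r \in col_union T.
    apply: (hlw r u (comp_sub hwf hCl hrC) huH); first by exists y0.
    by exists d; split=> //; lra.
  by move/negP: (comp_not_col hwf hCl hrC).
rewrite wlen_cat -/r.
have -> : m = (m.-1).+1 by rewrite prednK.
rewrite S_INR; lra.
Qed.

Theorem lemma5p1 :
  exists c : R,
  forall (V : finType) (e : rel V) (wt : V -> V -> R),
    symmetric e -> irreflexive e ->
    (forall x y, wt x y = wt y x) ->
    (forall x y, e x y -> Rlt R0 (wt x y)) ->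
    connected e (fun _ : V => True) ->
    forall (D eps : R),
      diameter e wt D ->
      Rlt R0 eps -> Rlt eps R1 ->
      forall h : hier V,
        gridtree_hierarchy e wt (Rmult eps D) h ->
        Rle (INR (hdepth h)) (Rdiv c eps).
Proof.
exists 3 => V e wt _ _ _ hpos _ D eps [hdiam _] he0 he1 h [hall hv].
have hinv := inv_valid hpos hv.
case: h hall hv hinv => H T ch /= hH hv _.
inversion hv as [pc H' T' ch' hconn hgt hlw huniq hiff hval]; subst.
move: hgt => [hw [hwf [hadj _]]].
set m := foldr maxn 0%N (map (@hdepth V) ch).
have heps3 : 3 / eps >= 3.
  apply: Rle_ge; apply: (Rmult_le_reg_r eps) => //.
  rewrite /Rdiv Rmult_assoc Rinv_l; nra.
case: (posnP m) => hm.
  rewrite hm /=; lra.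
have [c [hc hcd]] := in_map_nat (foldr_maxn_mem hm).
have [x [hxC hx]] := inv_valid hpos (hval c hc).
rewrite hcd in hx.
set C := hgraph c in hxC hx.
have hCl : leftover_comp e T C by apply/hiff; exact: In_map_mem.
have [z hz] := root_nonempty hwf.
have hzc : z \in col_union T by apply/bigcupP; exists (gt_root T) => //; move: hwf => [hr _].
have hzC : z \notin C by apply/negP => /(comp_not_col hwf hCl); rewrite hzc.
have [d [[[p [[_ [hwk hl]] hlen]] _] hdD]] := hdiam x z.
have hlC : last x p \notin C by rewrite hl.
have [p1 [y [p2 [ep [hall hyC]]]]] := first_exit hxC hlC.
move: hwk hlen; rewrite ep walk_from_cat => -[hw1 hw2] hlen.
set r := last x p1 in hw2.
have hrC : r \in C by exact: last_all_in.
move: (hw2) => /= [ery [_ _]].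
have hyc : y \in col_union T.
  by apply: (exit_col hwf hadj hCl hrC) => //; rewrite hH inE.
have h1 : INR m.-1 * (eps * D) <= wlen wt x p1.
  apply: (hx r p1); last by exists y.
  split=> //; split=> //; exact: walk_from_all hw1 hall.
have h2 := wlen_ge0 (wt:=wt) hpos hw2.
rewrite wlen_cat -/r in hlen.
have hD : 0 < D.
  case: (Rle_or_lt D 0) => // hD; nra.
have ha : INR m.-1 * eps <= 1.
  apply: (Rmult_le_reg_r D) => //; nra.
have -> : m = (m.-1).+1 by rewrite prednK.
rewrite S_INR.
have hpos_a := pos_INR m.-1.
apply: (Rmult_le_reg_r eps) => //.
rewrite /Rdiv Rmult_assoc Rinv_l; [nra | lra].
Qed.
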